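(* Let $r\ge0$ be an integer and let $(W,g)$ be a cubic space of dimension at most $\aleph_0$ with $\mathrm{rrk}(W)\le r$. Then $W$ embeds into the cubic space $V(r)$.
   Context: $k$ is algebraically closed of characteristic different from $2,3$. For $V$ with basis $\{v_i\}_{i\in I}$, the dual functionals $x_i$ are called coordinates; $P_n(V)$ is the space of formal, possibly infinite, $k$-linear combinations of degree-$n$ monomials in the $x_i$. A cubic space is $(V,f)$ with $f\in P_3(V)$; an embedding $(W,g)\to(V,f)$ is a $k$-linear map $\phi:W\to V$ with $f\circ\phi=g$. The strength of a homogeneous $h\in P_n(V)$, $n\ge1$, is the least $s$ with $h=\sum_{i=1}^s a_ib_i$, $a_i,b_i$ homogeneous of positive degree less than $n$ ($\infty$ if none). $\overline{P}_2(V)$ is $P_2(V)$ modulo the subspace of finite-strength quadratic forms; the residual rank $\mathrm{rrk}(f)\in\mathbf{N}\cup\{\infty\}$ is the dimension of the span in $\overline{P}_2(V)$ of the images of the formal partial derivatives $\partial f/\partial x_i$, and $\mathrm{rrk}(V,f)=\mathrm{rrk}(f)$. The cubic space $V(r)$ has coordinates $\{x_i\}_{1\le i\le r}\cup\{y_{i,j}\}_{1\le i\le r,\,j\ge1}\cup\{z_i\}_{i\ge1}$ and form $f_r=3\sum_{i=1}^rx_iq_i+\sum_{i\ge1}z_i^3$, where $q_i=\sum_{j\ge1}y_{i,j}^2$. *)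

(* Defs.v *)
From HB Require Import structures.
From mathcomp Require Import all_boot all_order all_algebra.
From mathcomp Require Import finmap multiset.
Set Implicit Arguments. Unset Strict Implicit. Unset Printing Implicit Defensive.
Import Order.TTheory GRing.Theory.
Local Open Scope ring_scope.

Section Forms.
Variable k : fieldType.
Variable I : choiceType.

(* A formal (possibly infinite) k-linear combination
   of monomials is a coefficient function on monomials. *)
Definition monomial := multiset I.
Definition fseries := monomial -> k.

Definition homog (n : nat) (F : fseries) : Prop :=
  forall m : monomial, size (enum_mset m) <> n -> F m = 0.

Definition msplits (m : monomial) : seq (monomial * monomial) :=
  undup [seq (seq_mset (mask (val bs) (enum_mset m)),
              seq_mset (mask (map negb (val bs)) (enum_mset m)))
        | bs <- enum {: (size (enum_mset m)).-tuple bool}].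

Definition fmul (a b : fseries) : fseries :=
  fun m => \sum_(p <- msplits m) a p.1 * b p.2.

Definition fderiv (F : fseries) (i : I) : fseries :=
  fun m => ((m i).+1)%:R * F (msetD (msetn 1 i) m).

Definition strength_le (n : nat) (h : fseries) (s : nat) : Prop :=
  exists (a b : 'I_s -> fseries) (da db : 'I_s -> nat),
    (forall t, [/\ (0 < da t < n)%N, (0 < db t < n)%N, (da t + db t)%N = n,
                   homog (da t) (a t) & homog (db t) (b t)]) /\
    h = (fun m => \sum_(t < s) fmul (a t) (b t) m).

Definition finite_strength (n : nat) (h : fseries) : Prop :=
  exists s, strength_le n h s.

(* rrk(f) <= r: the span of the images of the partial derivatives in
   Pbar_2 = P_2 / (finite-strength quadratic forms) has dimension <= r, i.e.
   it is contained in the span of (the images of) r quadratic forms. *)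
Definition rrk_le (f : fseries) (r : nat) : Prop :=
  exists Q : 'I_r -> fseries, (forall t, homog 2 (Q t)) /\
    forall i : I, exists c : 'I_r -> k,
      finite_strength 2 (fun m => fderiv f i m - \sum_(t < r) c t * Q t m).

Definition vect := {fsfun I -> k with 0}.

Definition monos (n : nat) (S : {fset I}) : seq monomial :=
  undup [seq seq_mset (map val (val t)) | t <- enum {: n.-tuple S}].

Definition feval (n : nat) (F : fseries) (v : vect) : k :=
  \sum_(m <- monos n (finsupp v)) F m * \prod_(i <- enum_mset m) v i.

End Forms.

Definition linmap (k : fieldType) (J I : choiceType)
    (phi : J -> vect k I) (w : vect k J) : vect k I :=
  [fsfun i in (\bigcup_(j <- finsupp w) finsupp (phi j))%fset
     => \sum_(j <- finsupp w) w j * phi j i].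

Definition cubic_embeds (k : fieldType) (J I : choiceType)
    (g : fseries k J) (f : fseries k I) : Prop :=
  exists phi : J -> vect k I, forall w : vect k J,
    feval 3 f (linmap phi w) = feval 3 g w.

(* The cubic space V(r).  Coordinate index type:
   inl (inl i)        ~ x_{i+1}      (i < r)
   inl (inr (i, j))   ~ y_{i+1,j+1}  (i < r, j : nat)
   inr n              ~ z_{n+1}      (n : nat) *)
Definition Vidx (r : nat) : choiceType := (('I_r + ('I_r * nat)) + nat)%type.

Definition isY (r : nat) (i : 'I_r) (a : Vidx r) : bool :=
  if a is inl (inr (i', _)) then i' == i else false.
Definition isZ (r : nat) (a : Vidx r) : bool :=
  if a is inr _ then true else false.

(* f_r = 3 sum_i x_i q_i + sum_n z_n^3, q_i = sum_j y_{i,j}^2: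
   coefficient 3 on x_i y_{i,j}^2, coefficient 1 on z_n^3, 0 elsewhere. *)
Definition f_V (k : fieldType) (r : nat) : fseries k (Vidx r) :=
  fun m =>
    (\sum_(i < r) \sum_(a <- finsupp m)
        (if isY i a && (m == msetD (msetn 1 (inl (inl i) : Vidx r)) (msetn 2 a))
         then 3%:R else 0))
    + \sum_(a <- finsupp m)
        (if isZ a && (m == msetn 3 a) then 1 else 0).
Arguments f_V k r : clear implicits.

(* Main.v *)
Require Import Defs.
From HB Require Import structures.
From mathcomp Require Import all_boot all_order all_algebra.
From mathcomp Require Import finmap multiset ring.
From Stdlib Require Import ClassicalEpsilon.
Set Implicit Arguments. Unset Strict Implicit.
Import Order.TTheory GRing.Theory.
Local Open Scope ring_scope.


Section Gen.
Variable k : fieldType.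
Variable I : choiceType.

Lemma sum_reindex (T : eqType) (s1 s2 : seq T) (F : T -> k) :
  uniq s1 -> uniq s2 -> (forall x, F x != 0 -> (x \in s1) = (x \in s2)) ->
  \sum_(x <- s1) F x = \sum_(x <- s2) F x.
Proof.
move=> u1 u2 H.
rewrite [LHS](bigID (fun x => F x != 0)) [RHS](bigID (fun x => F x != 0)) /=.
have z : forall s, \sum_(x <- s | ~~ (F x != 0)) F x = 0.
  by move=> s; apply: big1 => x /negPn/eqP.
rewrite !z !addr0 -[LHS]big_filter -[RHS]big_filter.
apply: perm_big; apply: uniq_perm; rewrite ?filter_uniq //.
by move=> x; rewrite !mem_filter; case: (boolP (F x != 0)) => //= /H.
Qed.
Lemma perm_msetD (A B : multiset I) : perm_eq (msetD A B) (A ++ B).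
Proof. by apply/allP => a _ /=; rewrite count_cat !count_mem_mset msetE2. Qed.

Lemma size_msetD (A B : multiset I) : size (msetD A B) = (size A + size B)%N.
Proof. by rewrite (perm_size (perm_msetD A B)) size_cat. Qed.

Lemma size_msetn n (a : I) : size (msetn n a) = n.
Proof. by rewrite enum_msetn size_nseq. Qed.

Lemma size_seq_mset (s : seq I) : size (seq_mset s) = size s.
Proof. exact: perm_size (perm_eq_seq_mset s). Qed.

Definition mprod (c : I -> k) (m : monomial I) := \prod_(i <- enum_mset m) c i.

Lemma mprodD c A B : mprod c (msetD A B) = mprod c A * mprod c B.
Proof. by rewrite /mprod (perm_big _ (perm_msetD A B)) big_cat. Qed.

Lemma mprodn c n a : mprod c (msetn n a) = c a ^+ n.
Proof. by rewrite /mprod enum_msetn big_nseq; elim: n => //= n ->; rewrite exprS. Qed.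

Lemma mem_monos n (S : {fset I}) (m : monomial I) :
  (m \in monos n S) = (size (enum_mset m) == n) && all (fun x => x \in S) (enum_mset m).
Proof.
rewrite /monos mem_undup; apply/mapP/idP.
  case=> t _ ->; rewrite size_seq_mset size_map size_tuple eqxx /=.
  apply/allP => x; rewrite (perm_mem (perm_eq_seq_mset _)) => /mapP[y _ ->].
  exact: (valP y).
case/andP => /eqP sz /allP sub.
have pm : map val (pmap (insub : I -> option S) (enum_mset m)) = enum_mset m.
  elim: (enum_mset m) sub => //= x s IH sub'.
  rewrite insubT ?sub' ?inE ?eqxx // => xS /=; rewrite IH // => y ys.
  by apply: sub'; rewrite inE ys orbT.
have szp : size (pmap (insub : I -> option S) (enum_mset m)) == n.
  by rewrite -(size_map val) pm sz.
exists (Tuple szp); first by rewrite mem_enum.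
by rewrite /= pm seq_mset_id.
Qed.

Lemma uniq_monos n (S : {fset I}) : uniq (monos n S). Proof. exact: undup_uniq. Qed.


Lemma in_enum_mset (A : multiset I) y : (y \in enum_mset A) = (0 < A y)%N.
Proof. exact: in_mset. Qed.

Lemma monos_split n (S : {fset I}) x (H : monomial I -> k) : x \notin S ->
  \sum_(m <- monos n (x |` S)%fset) H m =
  \sum_(p < n.+1) \sum_(m <- monos (n - p) S) H (msetD (msetn p x) m).
Proof.
move=> xS.
rewrite -(big_mkord xpredT (fun p => \sum_(m <- monos (n - p) S) H (msetD (msetn p x) m))).
rewrite /index_iota subn0 -(big_allpairs_dep (h := fun p m => msetD (msetn p x) m)).
have cntx : forall p (m : monomial I), m \in monos (n - p) S -> msetD (msetn p x) m x = p.
  move=> p m; rewrite mem_monos => /andP[_ /allP al].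
  rewrite msetE2 msetnxx; apply/eqP; rewrite -[X in _ == X]addn0 eqn_add2l.
  apply/eqP/mset_eq0P; apply/negP => /al; exact/negP.
apply: perm_big; apply: uniq_perm.
- exact: uniq_monos.
- apply: allpairs_uniq_dep; first exact: iota_uniq.
    by move=> p _; exact: uniq_monos.
  move=> [p1 m1] [p2 m2] /allpairsPdep [q1 [l1 [_ l1m ->]]] /allpairsPdep [q2 [l2 [_ l2m ->]]] /=.
  move=> eqM; have ep : q1 = q2 by rewrite -(cntx _ _ l1m) -(cntx _ _ l2m) eqM.
  subst q2; congr Tagged; exact: (can_inj (msetDKB (msetn q1 x)) eqM).
move=> M; apply/idP/allpairsPdep.
  rewrite mem_monos => /andP[/eqP szM /allP alM].
  pose p := M x; pose m := msetB M (msetn p x).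
  have sub : msubset (msetn p x) M.
    by apply/msubsetP => y; rewrite msetnE; case: eqP => // ->.
  have eM : msetD (msetn p x) m = M by exact: msetBDKC.
  have szm : (size (enum_mset M) = p + size (enum_mset m))%N.
    by rewrite -{1}eM size_msetD size_msetn.
  have pn : (p <= n)%N by rewrite -szM szm leq_addr.
  exists p, m; split => //.
  + by rewrite mem_iota add0n ltnS pn.
  + rewrite mem_monos -szM szm addKn eqxx /=; apply/allP => y.
    rewrite in_enum_mset msetE2 msetnE subn_gt0.
    case: eqP => [-> |ne]; first by rewrite ltnn.
    rewrite ?subn0 -in_enum_mset => /alM; rewrite in_fset1U.
    by case/orP => // /eqP.
case=> p [m [pi mm ->]]; move: pi; rewrite mem_iota add0n ltnS => pn.
move: mm; rewrite !mem_monos size_msetD size_msetn => /andP[/eqP -> /allP al].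
rewrite subnKC // eqxx /=; apply/allP => y.
rewrite in_enum_mset msetE2 msetnE in_fset1U.
case: eqP => //= _; rewrite add0n -in_enum_mset; exact: al.
Qed.


Lemma count_mask_split (s : seq I) (bs : seq bool) a : size bs = size s ->
  (count_mem a (mask bs s) + count_mem a (mask (map negb bs) s))%N = count_mem a s.
Proof.
elim: s bs => [|y s IH] [|b bs] //= [/IH e].
by case: b => /=; rewrite -e; case: (y == a); rewrite /= ?add0n ?add1n ?addSn ?addnS.  
Qed.

Lemma seq_mset1 (u : I) : seq_mset [:: u] = msetn 1 u.
Proof. by apply/msetP => z; rewrite mset_seqE msetnE /= addn0 eq_sym; case: eqP. Qed.

Lemma mask_exists (s : seq I) (m1 : multiset I) :
  (forall a, m1 a <= count_mem a s)%N ->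
  exists bs : seq bool, size bs = size s /\ seq_mset (mask bs s) = m1.
Proof.
elim: s m1 => [|y s IH] m1 le.
  exists [::]; split => //; apply/msetP => a; rewrite mset_seqE /=.
  by apply/esym/eqP; rewrite -leqn0 le.
case: (posnP (m1 y)) => [m1y|m1y].
  have [bs [sz e]] : exists bs : seq bool, size bs = size s /\ seq_mset (mask bs s) = m1.
    apply: IH => a; have := le a; rewrite /= .
    by case: (eqVneq y a) => [<-|ne]; rewrite ?m1y //= add0n.
  by exists (false :: bs); split; rewrite /= ?sz.
pose m1' := msetB m1 (msetn 1 y).
have [bs [sz e]] : exists bs : seq bool, size bs = size s /\ seq_mset (mask bs s) = m1'.
  apply: IH => a; rewrite msetE2 msetnE; have := le a; rewrite /=.
  case: (eqVneq a y) => [->|ne]; first by rewrite add1n leq_subLR.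
  by rewrite add0n subn0.
exists (true :: bs); split; rewrite /= ?sz //.
apply/msetP => a; rewrite mset_seqE /= -mset_seqE e msetE2 msetnE.
case: (eqVneq a y) => [->|ne]; first by rewrite add1n subn1 prednK.
by rewrite add0n subn0.
Qed.

Lemma mem_msplits (m m1 m2 : monomial I) :
  ((m1, m2) \in msplits m) = (msetD m1 m2 == m).
Proof.
rewrite /msplits mem_undup; apply/mapP/eqP.
  case=> bs _ [-> ->]; apply/msetP => a.
  by rewrite msetE2 !mset_seqE count_mask_split ?size_tuple // count_mem_mset.
move=> e.
have [bs [sz ebs]] : exists bs : seq bool, size bs = size (enum_mset m) /\
    seq_mset (mask bs (enum_mset m)) = m1.
  by apply: mask_exists => a; rewrite count_mem_mset -e msetE2 leq_addr.
have szb : size bs == size (enum_mset m) by rewrite sz.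
exists (Tuple szb); first by rewrite mem_enum.
rewrite /= ebs; congr pair; apply/msetP => a.
have := count_mask_split a sz; rewrite -!mset_seqE ebs seq_mset_id -e msetE2.
by move/eqP; rewrite eqn_add2l => /eqP.
Qed.

Lemma size1_mset (q : monomial I) : size (enum_mset q) = 1%N -> exists u, q = msetn 1 u.
Proof.
case E: (enum_mset q) => [|u [|]] // _; exists u.
by rewrite -(seq_mset_id q) E seq_mset1.
Qed.

Lemma fmul_pair (a b : fseries k I) x p : homog 1 a -> homog 1 b -> x != p ->
  fmul a b (msetD (msetn 1 x) (msetn 1 p)) =
  a (msetn 1 x) * b (msetn 1 p) + a (msetn 1 p) * b (msetn 1 x).
Proof.
move=> ha hb ne; rewrite /fmul.
have nxp : msetn 1 x != msetn 1 p :> monomial I.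
  by apply: contra ne => /eqP/msetn_inj ->.
rewrite (@sum_reindex _ _ [:: (msetn 1 x, msetn 1 p); (msetn 1 p, msetn 1 x)]).
- by rewrite big_cons big_seq1.
- exact: undup_uniq.
- by rewrite /= inE xpair_eqE negb_and nxp.
case=> q1 q2 /=; case: (eqVneq (size (enum_mset q1)) 1%N) => [s1|s1]; last first.
  by rewrite ha ?mul0r ?eqxx //; apply/eqP.
case: (eqVneq (size (enum_mset q2)) 1%N) => [s2|s2]; last first.
  by rewrite hb ?mulr0 ?eqxx //; apply/eqP.
move=> _; have [u eu] := size1_mset s1; have [v ev] := size1_mset s2; subst q1 q2.
rewrite mem_msplits !inE !xpair_eqE.
apply/eqP/idP.
  move=> e; have := congr1 (fun M : monomial I => M u) e.
  rewrite !msetE2 !msetnE eqxx.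
  case: (eqVneq u x) => [eux | nux].
    subst u; move=> _; rewrite eqxx /=; apply/orP; left; apply/eqP.
    by apply: (can_inj (msetDKB (msetn 1 x))).
  case: (eqVneq u p) => [eup | nup] //= _; subst u.
  rewrite eqxx /=; apply/orP; right; apply/eqP;
  by apply: (can_inj (msetDKB (msetn 1 p))); rewrite e msetDC.
by case/orP => /andP[/eqP -> /eqP ->] //; rewrite msetDC.
Qed.

Lemma fmul_double (a b : fseries k I) x : homog 1 a -> homog 1 b ->
  fmul a b (msetD (msetn 1 x) (msetn 1 x)) = a (msetn 1 x) * b (msetn 1 x).
Proof.
move=> ha hb; rewrite /fmul.
rewrite (@sum_reindex _ _ [:: (msetn 1 x, msetn 1 x)]).
- by rewrite big_seq1.
- exact: undup_uniq.
- by [].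
case=> q1 q2 /=; case: (eqVneq (size (enum_mset q1)) 1%N) => [s1|s1]; last first.
  by rewrite ha ?mul0r ?eqxx //; apply/eqP.
case: (eqVneq (size (enum_mset q2)) 1%N) => [s2|s2]; last first.
  by rewrite hb ?mulr0 ?eqxx //; apply/eqP.
move=> _; have [u eu] := size1_mset s1; have [v ev] := size1_mset s2; subst q1 q2.
rewrite mem_msplits !inE !xpair_eqE.
apply/eqP/idP; last by case/andP => /eqP -> /eqP ->.
move=> e; have := congr1 (fun M : monomial I => M u) e.
rewrite !msetE2 !msetnE eqxx.
case: (eqVneq u x) => [eux | nux] // _; subst u; rewrite eqxx /=; apply/eqP.
by apply: (can_inj (msetDKB (msetn 1 x))).
Qed.

End Gen.


Section Ev.
Variable k : fieldType.
Variable J : choiceType.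
Variable c : J -> k.

Definition FS (s : seq J) : {fset J} := [fset x | x in s]%fset.
Definition Ev n (F : fseries k J) s := \sum_(m <- monos n (FS s)) F m * mprod c m.
Definition L (s : seq J) (a : J -> k) := \sum_(y <- s) a y * c y.
Definition sh p x (F : fseries k J) : fseries k J := fun m => F (msetD (msetn p x) m).

Lemma FS_cons x s : FS (x :: s) = (x |` FS s)%fset.
Proof. by apply/fsetP => y; rewrite /FS !inE. Qed.

Lemma eq_Ev n F G s : F =1 G -> Ev n F s = Ev n G s.
Proof. by move=> e; apply: eq_bigr => m _; rewrite e. Qed.

Lemma Ev_cons n F x s : x \notin s ->
  Ev n F (x :: s) = \sum_(p < n.+1) c x ^+ p * Ev (n - p) (sh p x F) s.
Proof.
move=> xs; rewrite /Ev FS_cons (monos_split n (fun m => F m * mprod c m)).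
  apply: eq_bigr => p _; rewrite mulr_sumr; apply: eq_bigr => m _.
  by rewrite mprodD mprodn /sh mulrCA mulrA.
by rewrite /FS inE.
Qed.

Lemma Ev_nil n F : Ev n F [::] = (n == 0)%N%:R * F mset0.
Proof.
rewrite /Ev.
have -> : FS [::] = fset0 by apply/fsetP => y; rewrite /FS !inE.
rewrite (@sum_reindex _ _ _ (if n == 0%N then [:: mset0] else [::])).
- case: eqP => _; rewrite ?big_seq1 ?big_nil ?mul0r ?mul1r //.
  by rewrite /mprod enum_mset0 big_nil mulr1.
- exact: uniq_monos.
- by case: eqP.
move=> m _; rewrite mem_monos.
case E: (enum_mset m) => [|u s] /=.
  have -> : m = mset0 by apply/eqP; rewrite -size_mset_eq0 E.
  by case: n => [|n] //=; rewrite inE eqxx.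
rewrite andbF; case: (n == 0%N) => //; rewrite inE; apply/esym/negbTE.
by apply/eqP => em; move: E; rewrite em enum_mset0.
Qed.

Lemma Ev0 F s : uniq s -> Ev 0 F s = F mset0.
Proof.
elim: s F => [|x s IH] F; first by rewrite Ev_nil mul1r.
case/andP => xs us; rewrite Ev_cons // big_ord1 expr0 mul1r IH //.
by rewrite /sh msetn0 mset0D.
Qed.

Lemma Ev1 F s : uniq s -> Ev 1 F s = \sum_(y <- s) F (msetn 1 y) * c y.
Proof.
elim: s F => [|x s IH] F; first by rewrite Ev_nil mul0r big_nil.
case/andP => xs us; rewrite Ev_cons // big_ord_recr big_ord1 /= big_cons.
rewrite expr0 mul1r expr1 IH // Ev0 // /sh msetD0 msetn0 addrC mulrC.
by congr (_ + _); apply: eq_bigr => y _; rewrite mset0D.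
Qed.

Lemma Ev2_cons F x s : uniq (x :: s) ->
  Ev 2 F (x :: s) = Ev 2 F s
    + c x * \sum_(y <- s) F (msetD (msetn 1 x) (msetn 1 y)) * c y
    + c x ^+ 2 * F (msetn 2 x).
Proof.
case/andP => xs us; rewrite Ev_cons // !big_ord_recr big_ord0 /= add0r.
rewrite expr0 mul1r expr1 Ev1 // Ev0 // /sh msetD0 msetn0.
by congr (_ + _ + _); apply: eq_Ev => m; rewrite mset0D.
Qed.

Lemma Ev3_cons F x s : uniq (x :: s) ->
  Ev 3 F (x :: s) = Ev 3 F s + c x * Ev 2 (sh 1 x F) s
    + c x ^+ 2 * \sum_(y <- s) F (msetD (msetn 2 x) (msetn 1 y)) * c y
    + c x ^+ 3 * F (msetn 3 x).
Proof.
case/andP => xs us; rewrite Ev_cons // !big_ord_recr big_ord0 /= add0r.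
rewrite expr0 mul1r expr1 Ev1 // Ev0 // /sh msetD0 msetn0.
by congr (_ + _ + _ + _); apply: eq_Ev => m; rewrite mset0D.
Qed.

Lemma msetn2 (x : J) : msetn 2 x = msetD (msetn 1 x) (msetn 1 x).
Proof. by apply/msetP => y; rewrite msetE2 !msetnE; case: eqP. Qed.

Lemma Ev_fmul (a b : fseries k J) s : uniq s -> homog 1 a -> homog 1 b ->
  Ev 2 (fmul a b) s = L s (fun y => a (msetn 1 y)) * L s (fun y => b (msetn 1 y)).
Proof.
move=> us ha hb; elim: s us => [|x s IH] us.
  by rewrite Ev_nil /L !big_nil mul0r mulr0.
rewrite Ev2_cons // IH; last by case/andP: us.
case/andP: us => xs us.
rewrite /L !big_cons msetn2 fmul_double //.
have -> : \sum_(y <- s) fmul a b (msetD (msetn 1 x) (msetn 1 y)) * c y =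
   \sum_(y <- s) (a (msetn 1 x) * b (msetn 1 y) + a (msetn 1 y) * b (msetn 1 x)) * c y.
  apply: eq_big_seq => y ys; rewrite fmul_pair //; apply: contraNneq xs => ->; exact: ys.
have -> : \sum_(y <- s) (a (msetn 1 x) * b (msetn 1 y) + a (msetn 1 y) * b (msetn 1 x)) * c y
   = a (msetn 1 x) * \sum_(y <- s) b (msetn 1 y) * c y + b (msetn 1 x) * \sum_(y <- s) a (msetn 1 y) * c y.
  by rewrite !mulr_sumr -big_split; apply: eq_bigr => y _ /=; ring.
ring.
Qed.

End Ev.


Section Roots.
Variable k : closedFieldType.

Lemma root_ex n (x : k) : (0 < n)%N -> exists y : k, y ^+ n == x.
Proof.
move=> n0; have [y hy] := @solve_monicpoly k n (fun i => if i == 0%N then x else 0) n0.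
exists y; apply/eqP; rewrite hy (bigD1 (Ordinal n0)) //= big1 ?addr0 ?mulr1 //.
by move=> [[|i] hi] //= _; rewrite mul0r.
Qed.

Definition nroot n (x : k) : k :=
  if (0 < n)%N =P true is ReflectT h then xchoose (root_ex x h) else 0.

Lemma nrootK n (x : k) : (0 < n)%N -> nroot n x ^+ n = x.
Proof.
move=> n0; rewrite /nroot; case: eqP => [h|]; last by rewrite n0.
by apply/eqP; exact: (xchooseP (root_ex x h)).
Qed.

Variable J : Type.
Variable c : J -> k.

Definition lin (u v w : k) (a b d : J -> k) : J -> k := fun p => u * (a p + v * b p + w * d p).
Definition lin2 (u v : k) (a b : J -> k) : J -> k := fun p => u * (a p + v * b p).

End Roots.

Section Decomp.
Variable k : closedFieldType.
Variable J : choiceType.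
Variable c : J -> k.

Lemma L_lin s u v w a b d :
  L c s (lin u v w a b d) = u * (L c s a + v * L c s b + w * L c s d).
Proof.
rewrite /L !mulr_sumr -!big_split mulr_sumr.
by apply: eq_bigr => p _; rewrite /lin /=; ring.
Qed.

Lemma L_lin2 s u v a b : L c s (lin2 u v a b) = u * (L c s a + v * L c s b).
Proof.
rewrite /L !mulr_sumr -!big_split mulr_sumr.
by apply: eq_bigr => p _; rewrite /lin2 /=; ring.
Qed.

Definition cubes (kap : k) (a b d : J -> k) : seq (J -> k) :=
  let z := nroot 3 (kap / 24%:R) in
  [:: lin z 1 1 a b d; lin (- z) 1 (-1) a b d; lin (- z) (-1) 1 a b d; lin z (-1) (-1) a b d].

Lemma cubes_ok s kap a b d : (24%:R : k) != 0 ->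
  \sum_(f <- cubes kap a b d) L c s f ^+ 3 = kap * L c s a * L c s b * L c s d.
Proof.
move=> h24; rewrite /cubes !big_cons big_nil !L_lin.
have hz := @nrootK k 3 (kap / 24%:R) isT.
move: (nroot 3 (kap / 24%:R)) hz => z hz.
transitivity (z ^+ 3 * 24%:R * L c s a * L c s b * L c s d); first by ring.
by rewrite hz divfK.
Qed.

Definition squares (kap : k) (a b : J -> k) : seq (J -> k) :=
  [:: lin2 (nroot 2 (kap / 4%:R)) 1 a b; lin2 (nroot 2 (- kap / 4%:R)) (-1) a b].

Lemma squares_ok s kap a b : (4%:R : k) != 0 ->
  \sum_(f <- squares kap a b) L c s f ^+ 2 = kap * L c s a * L c s b.
Proof.
move=> h4; rewrite /squares !big_cons big_nil !L_lin2.
have hz := @nrootK k 2 (kap / 4%:R) isT.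
have hz' := @nrootK k 2 (- kap / 4%:R) isT.
move: (nroot 2 (kap / 4%:R)) (nroot 2 (- kap / 4%:R)) hz hz' => z z' hz hz'.
transitivity (z ^+ 2 * (L c s a + L c s b) ^+ 2 + z' ^+ 2 * (L c s a - L c s b) ^+ 2); first by ring.
rewrite hz hz'; field.
exact: h4.
Qed.

End Decomp.


Section Ext.
Variable k : fieldType.
Variable I : choiceType.

Lemma sum_pick (T : eqType) (s : seq T) (M : T) (F : T -> k) : uniq s -> M \in s ->
  \sum_(m <- s) (if m == M then F m else 0) = F M.
Proof.
move=> us Ms; rewrite (bigD1_seq M) //= eqxx big1 ?addr0 // => m /negPf ->; done.
Qed.

Lemma feval_ext n (F : fseries k I) (v : vect k I) (D : seq I) : uniq D ->
  {subset finsupp v <= D} ->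
  feval n F v = \sum_(m <- monos n (FS D)) F m * mprod v m.
Proof.
move=> uD sub; rewrite /feval.
apply: sum_reindex; rewrite ?uniq_monos // => m.
rewrite mulf_eq0 negb_or => /andP[_ pm].
have allv : forall a, a \in enum_mset m -> a \in finsupp v.
  move=> a am; move: pm; rewrite /mprod prodf_seq_eq0 => /hasPn /(_ a am) /=.
  by rewrite mem_finsupp.
rewrite !mem_monos; apply/andP/andP => -[sz _]; split => //; apply/allP => a am.
  by rewrite /FS inE; apply: sub; exact: allv.
exact: allv.
Qed.

End Ext.

Section FV.
Variable k : fieldType.
Variable r : nat.
Local Notation I := (Vidx r).

Definition xc (t : 'I_r) : I := inl (inl t).
Definition M1 (t : 'I_r) (a : I) : monomial I := msetD (msetn 1 (xc t)) (msetn 2 a).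

Lemma pick_sum (D : seq I) (P : pred I) (M : I -> monomial I) (K : k) (h : monomial I -> k) :
  uniq D -> (forall a, a \in D -> P a -> M a \in monos 3 (FS D)) ->
  \sum_(m <- monos 3 (FS D)) (\sum_(a <- D) (if P a && (m == M a) then K else 0)) * h m
  = \sum_(a <- D | P a) K * h (M a).
Proof.
move=> uD HM; under eq_bigr do rewrite mulr_suml.
rewrite exchange_big /= [RHS]big_mkcond big_seq [RHS]big_seq; apply: eq_bigr => a aD.
case Pa: (P a) => /=; last by rewrite big1 // => m _; rewrite mul0r.
rewrite (eq_bigr (fun m => if m == M a then K * h m else 0)); last first.
  by move=> m _; case: eqP => _; rewrite ?mul0r.
by rewrite sum_pick ?uniq_monos // HM.
Qed.

Lemma fV_sum (v : vect k I) (D : seq I) : uniq D -> {subset finsupp v <= D} ->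
  (forall t, xc t \in D) ->
  feval 3 (f_V k r) v = \sum_(t < r) 3%:R * v (xc t) * \sum_(a <- D | isY t a) v a ^+ 2
     + \sum_(a <- D | isZ a) v a ^+ 3.
Proof.
move=> uD sub xD; rewrite (feval_ext _ _ uD sub).
have inner : forall m, m \in monos 3 (FS D) -> forall (P : pred I) (M : I -> monomial I) (K : k),
    (forall a, 0 < M a a)%N ->
    \sum_(a <- finsupp m) (if P a && (m == M a) then K else 0)
    = \sum_(a <- D) (if P a && (m == M a) then K else 0).
  move=> m mm P M K hM; apply: sum_reindex; rewrite ?fset_uniq //.
  move=> a; case: andP => [[_ /eqP em] _|]; last by rewrite eqxx.
  have am : a \in enum_mset m by rewrite in_mset em hM.
  rewrite msuppE am; move: mm; rewrite mem_monos => /andP[_ /allP /(_ a am)].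
  by rewrite /FS inE.
have fVm : forall m, m \in monos 3 (FS D) -> f_V k r m =
   \sum_(t < r) \sum_(a <- D) (if isY t a && (m == M1 t a) then 3%:R else 0)
   + \sum_(a <- D) (if isZ a && (m == msetn 3 a) then 1 else 0).
  move=> m mm; rewrite /f_V; congr (_ + _).
    apply: eq_bigr => t _; apply: (inner m mm (isY t) (M1 t)) => a.
    by rewrite /M1 msetE2 !msetnE eqxx addn2.
  by apply: (inner m mm (@isZ r) (fun a => msetn 3 a)) => a; rewrite msetnE eqxx.
rewrite big_seq (eq_bigr (fun m => (\sum_(t < r) \sum_(a <- D) (if isY t a && (m == M1 t a) then 3%:R else 0)
   + \sum_(a <- D) (if isZ a && (m == msetn 3 a) then 1 else 0)) * mprod v m)); last first.
  by move=> m mm; rewrite fVm.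
rewrite -big_seq.
under eq_bigr do rewrite mulrDl.
rewrite big_split /=; congr (_ + _).
  under eq_bigr do rewrite mulr_suml.
  rewrite exchange_big /=; apply: eq_bigr => t _.
  rewrite pick_sum //; last first.
    move=> a aD _; rewrite mem_monos /M1 size_msetD !size_msetn /=.
    apply/allP => b; rewrite (perm_mem (perm_msetD _ _)) mem_cat !enum_msetn.
    by rewrite !mem_nseq /= => /orP[/eqP ->|/eqP ->]; rewrite /FS inE.
  rewrite mulr_sumr; apply: eq_bigr => a _.
  by rewrite /M1 mprodD !mprodn expr1 mulrA.
rewrite pick_sum //; last first.
  move=> a aD _; rewrite mem_monos size_msetn /=.
  by apply/allP => b; rewrite enum_msetn mem_nseq /= => /eqP ->; rewrite /FS inE.
by apply: eq_bigr => a _; rewrite mprodn mul1r.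
Qed.

End FV.


Section Main.
Variable k : closedFieldType.
Variable J : countType.
Variable c : J -> k.
Variable r : nat.
Variable g : fseries k J.
Variable Q : 'I_r -> fseries k J.
Variable C : J -> 'I_r -> k.
Variable sN : J -> nat.
Variables al be : J -> nat -> fseries k J.
Hypothesis Hd : forall x m, fderiv g x m - \sum_(t < r) C x t * Q t m =
   \sum_(i < sN x) fmul (al x i) (be x i) m.
Hypothesis Hal : forall x i, homog 1 (al x i).
Hypothesis Hbe : forall x i, homog 1 (be x i).

Definition pk (y : J) : nat := choice.pickle y.

Definition ee (y : J) : J -> k := fun p => (p == y)%:R.
Definition G1 (y : J) : J -> k := fun p => (pk y < pk p)%N%:R * g (msetD (msetn 2 y) (msetn 1 p)).
Definition Af (y : J) (i : nat) : J -> k := fun p => (pk y < pk p)%N%:R * al y i (msetn 1 p).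
Definition Bf (y : J) (i : nat) : J -> k := fun p => (pk y < pk p)%N%:R * be y i (msetn 1 p).
Definition Xg (y : J) (t : 'I_r) : J -> k := fun p => (pk y <= pk p)%N%:R * C p t.
Definition Qy (y : J) (t : 'I_r) : J -> k :=
  fun p => (pk y < pk p)%N%:R * Q t (msetD (msetn 1 y) (msetn 1 p)).
Definition Cf (t : 'I_r) : J -> k := fun p => C p t.

Definition triple := (k * (J -> k) * (J -> k) * (J -> k))%type.
Definition Triples y : seq triple :=
  [:: (g (msetn 3 y), ee y, ee y, ee y); (1, ee y, ee y, G1 y)]
  ++ [seq (1, ee y, Af y (nat_of_ord i), Bf y (nat_of_ord i)) | i : 'I_(sN y) <- index_enum 'I_(sN y)]
  ++ [seq (- Q t (msetn 2 y), Xg y t, ee y, ee y) | t <- index_enum 'I_r]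
  ++ [seq (-1, Xg y t, ee y, Qy y t) | t <- index_enum 'I_r].

Definition TV s (e : triple) :=
  e.1.1.1 * L c s e.1.1.2 * L c s e.1.2 * L c s e.2.
Definition Stage s y := \sum_(e <- Triples y) TV s e.

Lemma L_cons x s a : L c (x :: s) a = a x * c x + L c s a.
Proof. by rewrite /L big_cons. Qed.

Lemma eq_big_In (T : Type) (l : seq T) (F G : T -> k) :
  (forall e, List.In e l -> F e = G e) -> \sum_(e <- l) F e = \sum_(e <- l) G e.
Proof.
elim: l => [|a l IH] H; first by rewrite !big_nil.
rewrite !big_cons H /=; last by left.
by rewrite IH // => e he; apply: H; right.
Qed.

Lemma Triples_van y x e : (pk x < pk y)%N -> List.In e (Triples y) ->
  [/\ e.1.1.2 x = 0, e.1.2 x = 0 & e.2 x = 0].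
Proof.
move=> lt.
have ne : x != y by apply: contraTneq lt => ->; rewrite ltnn.
have e0 : ee y x = 0 by rewrite /ee (negbTE ne).
have gt : (pk y < pk x)%N = false by apply/negbTE; rewrite -leqNgt ltnW.
have ge : (pk y <= pk x)%N = false by apply/negbTE; rewrite -ltnNge.
rewrite /Triples => H.
repeat (apply List.in_app_or in H; case: H => H);
  try (case: H => [<-|H]; last case: H => [<-|[]]);
  try (apply List.in_map_iff in H; case: H => [i [<- _]]);
  by rewrite /= ?e0 /G1 /Af /Bf /Xg /Qy ?gt ?ge ?mul0r.
Qed.

Lemma Stage_cons x s y : (pk x < pk y)%N -> Stage (x :: s) y = Stage s y.
Proof.
move=> lt; apply: eq_big_In => e /(Triples_van lt) [h1 h2 h3].
by rewrite /TV !L_cons h1 h2 h3 !mul0r !add0r.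
Qed.

Lemma Ev_sh1 x s : uniq s -> x \notin s ->
  Ev c 2 (sh 1 x g) s = \sum_(t < r) C x t * Ev c 2 (Q t) s
   + \sum_(i < sN x) L c s (fun y => al x i (msetn 1 y)) * L c s (fun y => be x i (msetn 1 y)).
Proof.
move=> us xs.
have -> : Ev c 2 (sh 1 x g) s = Ev c 2 (fun m => \sum_(t < r) C x t * Q t m
      + \sum_(i < sN x) fmul (al x i) (be x i) m) s.
  rewrite /Ev big_seq [RHS]big_seq; apply: eq_bigr => m.
  rewrite mem_monos => /andP[_ /allP al0]; congr (_ * _).
  have mx : m x = 0%N.
    apply/mset_eq0P; apply/negP => /al0; rewrite /FS inE; exact/negP.
  rewrite -Hd addrC subrK /fderiv mx mul1r /sh; done.
rewrite /Ev.
under eq_bigr do rewrite mulrDl mulr_suml mulr_suml.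
rewrite big_split /=; congr (_ + _).
  rewrite exchange_big /=; apply: eq_bigr => t _; rewrite mulr_sumr.
  by apply: eq_bigr => m _; rewrite mulrA.
rewrite exchange_big /=; apply: eq_bigr => i _.
by rewrite -Ev_fmul.
Qed.

Lemma sorted_cons x s : sorted (fun a b => pk a < pk b)%N (x :: s) ->
  [/\ sorted (fun a b => pk a < pk b)%N s, uniq (x :: s) & all (fun y => pk x < pk y)%N s].
Proof.
move=> srt; split.
- exact: path_sorted srt.
- by apply: (sorted_uniq (leT := fun a b => pk a < pk b)%N) => //;
     [move=> a b d; exact: ltn_trans | move=> a; rewrite ltnn].
- by apply: (order_path_min (leT := fun a b => pk a < pk b)%N) => // a b d; exact: ltn_trans.
Qed.

Lemma L0_ee x s : x \notin s -> L c s (ee x) = 0.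
Proof.
move=> xs; rewrite /L big_seq big1 // => y ys; rewrite /ee.
by case: eqP => [e|_]; rewrite ?mul0r //; rewrite -e ys in xs.
Qed.

Lemma main_id s : sorted (fun a b => pk a < pk b)%N s ->
  Ev c 3 g s = \sum_(t < r) L c s (Cf t) * Ev c 2 (Q t) s + \sum_(y <- s) Stage s y.
Proof.
elim: s => [|x s IH] srt.
  rewrite Ev_nil big_nil addr0 /= mul0r big1 // => t _; by rewrite /L big_nil mul0r.
have [srt' us allx] := sorted_cons srt.
have xs : x \notin s by case/andP: us.
have us' : uniq s by case/andP: us.
rewrite Ev3_cons // Ev_sh1 // IH //.
rewrite big_cons; have -> : \sum_(y <- s) Stage (x :: s) y = \sum_(y <- s) Stage s y.
  by apply: eq_big_seq => y ys; apply: Stage_cons; exact: (allP allx) y ys.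
under [X in _ = X + _]eq_bigr do rewrite Ev2_cons //.
have Lee : L c (x :: s) (ee x) = c x by rewrite L_cons L0_ee // /ee eqxx mul1r addr0.
have LG1 : L c (x :: s) (G1 x) = \sum_(y <- s) g (msetD (msetn 2 x) (msetn 1 y)) * c y.
  rewrite L_cons /G1 ltnn mul0r mul0r add0r /L big_seq [RHS]big_seq.
  by apply: eq_bigr => y ys; rewrite (allP allx) // mul1r.
have LA : forall i, L c (x :: s) (Af x i) = L c s (fun y => al x i (msetn 1 y)).
  move=> i; rewrite L_cons /Af ltnn mul0r mul0r add0r /L big_seq [RHS]big_seq.
  by apply: eq_bigr => y ys; rewrite (allP allx) // mul1r.
have LB : forall i, L c (x :: s) (Bf x i) = L c s (fun y => be x i (msetn 1 y)).
  move=> i; rewrite L_cons /Bf ltnn mul0r mul0r add0r /L big_seq [RHS]big_seq.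
  by apply: eq_bigr => y ys; rewrite (allP allx) // mul1r.
have LQ : forall t, L c (x :: s) (Qy x t) = \sum_(y <- s) Q t (msetD (msetn 1 x) (msetn 1 y)) * c y.
  move=> t; rewrite L_cons /Qy ltnn mul0r mul0r add0r /L big_seq [RHS]big_seq.
  by apply: eq_bigr => y ys; rewrite (allP allx) // mul1r.
have LX : forall t, L c (x :: s) (Xg x t) = L c (x :: s) (Cf t).
  move=> t; rewrite !L_cons /Xg leqnn mul1r; congr (_ + _).
  rewrite /L big_seq [RHS]big_seq.
  by apply: eq_bigr => y ys; rewrite ltnW ?(allP allx) // mul1r.
have Sx : Stage (x :: s) x = g (msetn 3 x) * (c x) ^+ 3
   + (c x) ^+ 2 * \sum_(y <- s) g (msetD (msetn 2 x) (msetn 1 y)) * c y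
   + (c x) * \sum_(j < sN x) L c s (fun y => al x j (msetn 1 y)) * L c s (fun y => be x j (msetn 1 y))
   - (c x) ^+ 2 * \sum_(j < r) Q j (msetn 2 x) * L c (x :: s) (Cf j)
   - (c x) * \sum_(j < r) L c (x :: s) (Cf j) * \sum_(y <- s) Q j (msetD (msetn 1 x) (msetn 1 y)) * c y.
  rewrite /Stage /Triples !big_cat /= !big_cons !big_nil !big_map /TV /=.
  rewrite Lee LG1.
  have -> : \sum_(j < sN x) 1 * (c x) * L c (x :: s) (Af x j) * L c (x :: s) (Bf x j) =
     (c x) * \sum_(j < sN x) L c s (fun y => al x j (msetn 1 y)) * L c s (fun y => be x j (msetn 1 y)).
    by rewrite mulr_sumr; apply: eq_bigr => j _; rewrite LA LB; ring.
  have -> : \sum_(j < r) - Q j (msetn 2 x) * L c (x :: s) (Xg x j) * (c x) * (c x) =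
     - ((c x) ^+ 2 * \sum_(j < r) Q j (msetn 2 x) * L c (x :: s) (Cf j)).
    by rewrite mulr_sumr -sumrN; apply: eq_bigr => j _; rewrite LX; ring.
  have -> : \sum_(j < r) -1 * L c (x :: s) (Xg x j) * (c x) * L c (x :: s) (Qy x j) =
     - ((c x) * \sum_(j < r) L c (x :: s) (Cf j) * \sum_(y <- s) Q j (msetD (msetn 1 x) (msetn 1 y)) * c y).
    by rewrite mulr_sumr -sumrN; apply: eq_bigr => j _; rewrite LX LQ; ring.
  ring.
rewrite Sx.
have -> : \sum_(i < r) L c (x :: s) (Cf i) * (Ev c 2 (Q i) s
      + (c x) * \sum_(y <- s) Q i (msetD (msetn 1 x) (msetn 1 y)) * c y + (c x) ^+ 2 * Q i (msetn 2 x))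
   = \sum_(i < r) L c s (Cf i) * Ev c 2 (Q i) s + (c x) * \sum_(i < r) C x i * Ev c 2 (Q i) s
     + (c x) * \sum_(j < r) L c (x :: s) (Cf j) * \sum_(y <- s) Q j (msetD (msetn 1 x) (msetn 1 y)) * c y
     + (c x) ^+ 2 * \sum_(j < r) Q j (msetn 2 x) * L c (x :: s) (Cf j).
  rewrite !mulr_sumr -!big_split; apply: eq_bigr => i _ /=.
  by rewrite L_cons /Cf; ring.
ring.
Qed.

Lemma Q_id t s : sorted (fun a b => pk a < pk b)%N s ->
  Ev c 2 (Q t) s = \sum_(y <- s) (Q t (msetn 2 y) * L c s (ee y) ^+ 2 + L c s (ee y) * L c s (Qy y t)).
Proof.
elim: s => [|x s IH] srt.
  by rewrite Ev_nil big_nil mul0r.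
have [srt' us allx] := sorted_cons srt.
have xs : x \notin s by case/andP: us.
rewrite Ev2_cons // IH // big_cons.
have Lee : L c (x :: s) (ee x) = c x by rewrite L_cons L0_ee // /ee eqxx mul1r addr0.
have LQ : L c (x :: s) (Qy x t) = \sum_(y <- s) Q t (msetD (msetn 1 x) (msetn 1 y)) * c y.
  rewrite L_cons /Qy ltnn mul0r mul0r add0r /L big_seq [RHS]big_seq.
  by apply: eq_bigr => y ys; rewrite (allP allx) // mul1r.
have -> : \sum_(y <- s) (Q t (msetn 2 y) * L c (x :: s) (ee y) ^+ 2 + L c (x :: s) (ee y) * L c (x :: s) (Qy y t))
   = \sum_(y <- s) (Q t (msetn 2 y) * L c s (ee y) ^+ 2 + L c s (ee y) * L c s (Qy y t)).
  apply: eq_big_seq => y ys; have lt := allP allx y ys.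
  have ne : x != y by apply: contraTneq lt => ->; rewrite ltnn.
  have gt : (pk y < pk x)%N = false by apply/negbTE; rewrite -leqNgt ltnW.
  rewrite !L_cons /ee /Qy (negbTE ne) gt.
  by rewrite !mul0r !add0r.
rewrite Lee LQ; ring.
Qed.

Lemma Triples_ee y e : List.In e (Triples y) -> e.1.1.2 = ee y \/ e.1.2 = ee y.
Proof.
rewrite /Triples => H.
repeat (apply List.in_app_or in H; case: H => H);
  try (case: H => [<-|H]; last case: H => [<-|[]]);
  try (apply List.in_map_iff in H; case: H => [i [<- _]]); by [left | right].
Qed.

Lemma Stage0 s y : y \notin s -> Stage s y = 0.
Proof.
move=> ys; rewrite /Stage; transitivity (\sum_(e <- Triples y) (0 : k)).
  apply: eq_big_In => e /Triples_ee [] h; rewrite /TV h L0_ee //.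
    by rewrite mulr0 !mul0r.
  by rewrite mulr0 !mul0r.
by rewrite big1.
Qed.

Definition Zlist y : seq (J -> k) := flatten [seq cubes e.1.1.1 e.1.1.2 e.1.2 e.2 | e <- Triples y].
Definition Ylist t y : seq (J -> k) :=
  squares (Q t (msetn 2 y)) (ee y) (ee y) ++ squares 1 (ee y) (Qy y t).

Lemma Zlist_ok s y : (24%:R : k) != 0 ->
  \sum_(f <- Zlist y) L c s f ^+ 3 = Stage s y.
Proof.
move=> h; rewrite /Zlist big_flatten big_map; apply: eq_bigr => e _.
by rewrite cubes_ok.
Qed.

Lemma Ylist_ok s t y : (4%:R : k) != 0 ->
  \sum_(f <- Ylist t y) L c s f ^+ 2 =
  Q t (msetn 2 y) * L c s (ee y) ^+ 2 + L c s (ee y) * L c s (Qy y t).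
Proof. by move=> h; rewrite /Ylist big_cat !squares_ok // /= mul1r expr2 mulrA. Qed.

Definition van y (f : J -> k) := forall p, (pk p < pk y)%N -> f p = 0.

Lemma van_lin y u v w a b d : van y a -> van y b -> van y d -> van y (lin u v w a b d).
Proof. by move=> ha hb hd p lt; rewrite /lin ha ?hb ?hd // !mulr0 !addr0 mulr0. Qed.

Lemma van_lin2 y u v a b : van y a -> van y b -> van y (lin2 u v a b).
Proof. by move=> ha hb p lt; rewrite /lin2 ha ?hb // !mulr0 !addr0 mulr0. Qed.

Lemma In_flatten (T : Type) (x : T) (ss : seq (seq T)) :
  List.In x (flatten ss) -> exists l, List.In l ss /\ List.In x l.
Proof.
elim: ss => [|l ss IH] //= H.
case: (List.in_app_or _ _ _ H) => [h|h]; first by exists l; split => //; left.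
by case: (IH h) => l' [h1 h2]; exists l'; split => //; right.
Qed.

Lemma In_cat (T : Type) (x : T) (s1 s2 : seq T) :
  List.In x (s1 ++ s2) -> List.In x s1 \/ List.In x s2.
Proof.
elim: s1 => [|a s1 IH] /=; first by right.
case=> [<-|H]; first by left; left.
by case: (IH H) => h; [left; right | right].
Qed.

Lemma In_map (T U : Type) (f : T -> U) (y : U) (l : seq T) :
  List.In y (map f l) -> exists x, List.In x l /\ f x = y.
Proof.
elim: l => [|a l IH] //= [<-|H]; first by exists a; split => //; left.
by case: (IH H) => x [h1 h2]; exists x; split => //; right.
Qed.

Lemma In_nth (T : Type) (d : T) (l : seq T) i : (i < size l)%N -> List.In (nth d l i) l.
Proof.
elim: l i => [|a l IH] [|i] //= h; first by left.
by right; apply: IH.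
Qed.

Lemma Zlist_van y f : List.In f (Zlist y) -> van y f.
Proof.
rewrite /Zlist => H; case: (In_flatten H) => l [hl hf]; case: (In_map hl) => e [he el]; subst l.
have lt : forall p, (pk p < pk y)%N -> [/\ e.1.1.2 p = 0, e.1.2 p = 0 & e.2 p = 0] by move=> p hp; exact: Triples_van hp he.
have va : van y e.1.1.2 by move=> p /lt [].
have vb : van y e.1.2 by move=> p /lt [].
have vd : van y e.2 by move=> p /lt [].
move: hf; rewrite /cubes /=.
by do 4! (case=> [<-|]; first exact: van_lin).
Qed.

Lemma Ylist_van t y f : List.In f (Ylist t y) -> van y f.
Proof.
have ve : van y (ee y).
  by move=> p lt; rewrite /ee; case: eqP => // e; rewrite e ltnn in lt.
have vq : van y (Qy y t).
  move=> p lt; rewrite /Qy (_ : (pk y < pk p)%N = false) ?mul0r //.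
  by apply/negbTE; rewrite -leqNgt ltnW.
rewrite /Ylist => H; case: (In_cat H); rewrite /squares /=.
  all: by do 2! (case=> [<-|]; first exact: van_lin2).
Qed.


Definition f0 : J -> k := fun _ => 0.
Definition ZL (a : nat) : seq (J -> k) :=
  if @choice.pickle_inv J a is Some y then Zlist y else [::].
Definition YL t (a : nat) : seq (J -> k) :=
  if @choice.pickle_inv J a is Some y then Ylist t y else [::].

Definition val (p : J) (a : Vidx r) : k :=
  match a with
  | inl (inl t) => C p t / 3%:R
  | inl (inr (t, n)) =>
      if @choice.pickle_inv (nat * nat)%type n is Some (a', i) then nth f0 (YL t a') i p else 0
  | inr n =>
      if @choice.pickle_inv (nat * nat)%type n is Some (a', i) then nth f0 (ZL a') i p else 0
  end.

Definition pairs4 B := [seq (a, i) | a <- iota 0 B.+1, i <- iota 0 4].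
Definition pairsZ B := [seq (a, i) | a <- iota 0 B.+1, i <- iota 0 (size (ZL a))].
Definition Ycoords (t : 'I_r) B : seq (Vidx r) :=
  [seq (inl (inr (t, choice.pickle ai)) : Vidx r) | ai <- pairs4 B].
Definition Zcoords B : seq (Vidx r) := [seq (inr (choice.pickle ai) : Vidx r) | ai <- pairsZ B].
Definition Xcoords : seq (Vidx r) := [seq xc t | t <- enum 'I_r].
Definition Coords B := Xcoords ++ flatten [seq Ycoords t B | t <- enum 'I_r] ++ Zcoords B.

Lemma nth_nz (l : seq (J -> k)) i p : nth f0 l i p != 0 -> (i < size l)%N.
Proof. by apply: contraR; rewrite -leqNgt => h; rewrite nth_default. Qed.

Lemma size_Ylist t y : size (Ylist t y) = 4%N.
Proof. by []. Qed.

Lemma van_nz y f p : van y f -> f p != 0 -> (pk y <= pk p)%N.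
Proof. by move=> v; apply: contraR; rewrite -ltnNge => /v ->. Qed.

Lemma valY_supp p t n B : (pk p <= B)%N -> val p (inl (inr (t, n))) != 0 ->
  (inl (inr (t, n)) : Vidx r) \in Ycoords t B.
Proof.
move=> pB; rewrite /val.
case E: (choice.pickle_inv n) => [[a' i]|]; last by rewrite eqxx.
rewrite /YL; case E2: (choice.pickle_inv a') => [y|]; last by rewrite nth_nil eqxx.
move=> nz; have lt := nth_nz nz; rewrite size_Ylist in lt.
have vy := van_nz (Ylist_van (In_nth f0 (lt : (i < size (Ylist t y))%N))) nz.
have ea : a' = pk y by rewrite /pk -(@pickle_invK J a') E2.
have en : n = choice.pickle (a', i) by rewrite -(@pickle_invK (nat * nat)%type n) E.
apply/mapP; exists (a', i); last by rewrite en.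
apply/allpairsPdep; exists a', i; split => //; rewrite mem_iota //= ea ltnS.
exact: leq_trans vy pB.
Qed.

Lemma valZ_supp p n B : (pk p <= B)%N -> val p (inr n) != 0 ->
  (inr n : Vidx r) \in Zcoords B.
Proof.
move=> pB; rewrite /val.
case E: (choice.pickle_inv n) => [[a' i]|]; last by rewrite eqxx.
move=> nz; have lt := nth_nz nz.
move: nz lt; rewrite /ZL; case E2: (choice.pickle_inv a') => [y|]; last by rewrite nth_nil eqxx.
move=> nz lt.
have vy := van_nz (Zlist_van (In_nth f0 lt)) nz.
have ea : a' = pk y by rewrite /pk -(@pickle_invK J a') E2.
have en : n = choice.pickle (a', i) by rewrite -(@pickle_invK (nat * nat)%type n) E.
apply/mapP; exists (a', i); last by rewrite en.
apply/allpairsPdep; exists a', i; split => //; last by rewrite mem_iota /= /ZL E2.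
by rewrite mem_iota /= ea ltnS; exact: leq_trans vy pB.
Qed.

Lemma val_supp p a B : (pk p <= B)%N -> val p a != 0 -> a \in Coords B.
Proof.
move=> pB; case: a => [[t|[t n]]|n] nz; rewrite !mem_cat.
- by apply/orP; left; apply/mapP; exists t; rewrite ?mem_enum.
- apply/orP; right; apply/orP; left; apply/flattenP; exists (Ycoords t B).
    by apply/mapP; exists t; rewrite ?mem_enum.
  exact: valY_supp pB nz.
- by apply/orP; right; apply/orP; right; exact: valZ_supp pB nz.
Qed.

Lemma in_FS (T : choiceType) (s : seq T) x : (x \in FS s) = (x \in s).
Proof. by rewrite /FS inE. Qed.

Definition phi (p : J) : vect k (Vidx r) := [fsfun a in FS (Coords (pk p)) => val p a].

Lemma phiE p a : phi p a = val p a.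
Proof.
rewrite /phi fsfun_fun; case: ifP => // H; apply/esym/eqP; apply: contraFT H => nz.
by rewrite in_FS; exact: val_supp (leqnn _) nz.
Qed.

Lemma linmapE (w : vect k J) a :
  linmap phi w a = \sum_(j <- finsupp w) w j * val j a.
Proof.
rewrite /linmap fsfun_fun; case: ifP => [_|H].
  by apply: eq_bigr => j _; rewrite phiE.
apply/esym; rewrite big_seq big1 // => j jw; rewrite -phiE.
case: (finsuppP (phi j) a) => [_|af]; first by rewrite /= mulr0.
have sub := @bigfcup_sup _ _ (finsupp w) j xpredT (fun j => finsupp (phi j)) jw isT.
by move: H; rewrite (fsubsetP sub a af).
Qed.

Lemma pk_inj : injective pk.
Proof. exact: (pcan_inj (@pickleK_inv J)). Qed.

Lemma stage_sum (s : seq J) (F : J -> k) A : uniq s ->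
  (forall y, F y != 0 -> y \in s) -> (forall y, y \in s -> (pk y <= A)%N) ->
  \sum_(a <- iota 0 A.+1) (if @choice.pickle_inv J a is Some y then F y else 0)
  = \sum_(y <- s) F y.
Proof.
move=> us hF hA.
transitivity (\sum_(a <- iota 0 A.+1) oapp F 0 (@choice.pickle_inv J a)).
  by apply: eq_bigr => a _; case: choice.pickle_inv.
rewrite -big_pmap; apply: sum_reindex => //.
  by apply: (pmap_uniq (@pickle_invK J)); exact: iota_uniq.
move=> y /hF ys; rewrite ys mem_pmap; apply/mapP; exists (pk y).
  by rewrite mem_iota /= ltnS hA.
by rewrite /pk pickleK_inv.
Qed.

Lemma uniq_pairs4 B : uniq (pairs4 B).
Proof.
apply: allpairs_uniq; rewrite ?iota_uniq //.
by move=> [a i] [a' i'] _ _.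
Qed.

Lemma uniq_pairsZ B : uniq (pairsZ B).
Proof.
apply: allpairs_uniq_dep; rewrite ?iota_uniq //.
  by move=> a _; exact: iota_uniq.
move=> [a i] [a' i'] _ _ /= [ea ei]; subst a'; subst i'; done.
Qed.

Lemma uniq_Ycoords t B : uniq (Ycoords t B).
Proof.
rewrite map_inj_uniq ?uniq_pairs4 // => x y [].
exact: (pcan_inj (@pickleK_inv (nat * nat)%type)).
Qed.

Lemma uniq_Zcoords B : uniq (Zcoords B).
Proof.
rewrite map_inj_uniq ?uniq_pairsZ // => x y [].
exact: (pcan_inj (@pickleK_inv (nat * nat)%type)).
Qed.

Lemma L_f0 s : L c s f0 = 0.
Proof. by rewrite /L big1 // => j _; rewrite /f0 mul0r. Qed.

Lemma sum_nth_pow (l : seq (J -> k)) s n e : (size l <= n)%N ->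
  \sum_(i <- iota 0 n) L c s (nth f0 l i) ^+ e.+1 = \sum_(f <- l) L c s f ^+ e.+1.
Proof.
move=> sz; rewrite [RHS](big_nth f0) /index_iota subn0.
rewrite -(subnKC sz) iotaD big_cat /= add0n [X in _ + X]big1_seq ?addr0 //.
move=> i /andP[_]; rewrite mem_iota => /andP[h _].
by rewrite nth_default // L_f0 expr0n.
Qed.

Lemma embed_eq (w : vect k J) : (forall j, c j = w j) ->
  (24%:R : k) != 0 -> (4%:R : k) != 0 -> (3%:R : k) != 0 ->
  feval 3 (f_V k r) (linmap phi w) = feval 3 g w.
Proof.
move=> Hc h24 h4 h3.
pose s := sort (fun a b => pk a <= pk b)%N (enum_fset (finsupp w)).
have ms : s =i finsupp w by move=> y; rewrite mem_sort.
have us : uniq s by rewrite sort_uniq fset_uniq.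
have srt : sorted (fun a b => pk a < pk b)%N s.
  have s1 : sorted (fun a b => pk a <= pk b)%N s.
    by apply: sort_sorted => a b; exact: leq_total.
  have : sorted ltn (map pk s).
    by rewrite ltn_sorted_uniq_leq (map_inj_uniq pk_inj) us sorted_map.
  by rewrite sorted_map.
have FSs : FS s = finsupp w by apply/fsetP => y; rewrite in_FS ms.
pose A := \max_(j <- s) pk j.
have hA : forall j, j \in s -> (pk j <= A)%N.
  by move=> j js; rewrite /A; exact: (@leq_bigmax_seq _ s xpredT pk j js).
pose D := undup (Coords A).
have VE : forall a, linmap phi w a = \sum_(j <- s) val j a * c j.
  move=> a; rewrite linmapE (perm_big s); last by rewrite perm_sym /s perm_sort.
  by apply: eq_bigr => j _; rewrite Hc mulrC.
have Vnz : forall a, linmap phi w a != 0 -> exists2 j, j \in s & val j a != 0.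
  move=> a; rewrite VE => nz.
  have : has (fun j => val j a != 0) s.
    apply: contraR nz => /hasPn H; rewrite big_seq big1 // => j /H /negPn/eqP ->.
    by rewrite mul0r.
  by case/hasP => j js nzj; exists j.
have subD : {subset finsupp (linmap phi w) <= D}.
  move=> a; rewrite mem_finsupp => /Vnz [j js nzj].
  by rewrite mem_undup; exact: val_supp (hA j js) nzj.
have xD : forall t, xc t \in D.
  by move=> t; rewrite mem_undup !mem_cat; apply/orP; left; apply/mapP; exists t; rewrite ?mem_enum.
rewrite (fV_sum (undup_uniq _) subD xD).
have VX : forall t, linmap phi w (xc t) = L c s (Cf t) / 3%:R.
  by move=> t; rewrite VE /L mulr_suml; apply: eq_bigr => j _; rewrite /val /Cf mulrAC.
have VY : forall t, \sum_(a <- D | isY t a) linmap phi w a ^+ 2 = Ev c 2 (Q t) s.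
  move=> t.
  rewrite big_mkcond /= (sum_reindex (s2 := Ycoords t A) (undup_uniq _) (uniq_Ycoords t A)); last first.
    move=> a; case: ifP => [Ya|_]; last by rewrite eqxx.
    move=> nz.
    have nz' : linmap phi w a != 0 by apply: contraNneq nz => ->; rewrite expr0n.
    have [j js nzj] := Vnz _ nz'.
    move: Ya; case: a {nz nz'} nzj => [[t'|[t' n]]|n] nzj //= /eqP et; subst t'.
    rewrite mem_undup (val_supp (hA j js) nzj).
    by apply/esym; exact: valY_supp (hA j js) nzj.
  rewrite big_seq (eq_bigr (fun a => linmap phi w a ^+ 2)); last first.
    by move=> a /mapP [ai _ ->] /=; rewrite eqxx.
  rewrite -big_seq /Ycoords big_map /pairs4 big_allpairs.
  rewrite (@Q_id t s srt) -(@stage_sum s _ A us); first last.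
  - exact: hA.
  - move=> y nz; apply: contraR nz => ys; rewrite L0_ee // expr0n /= mulr0 mul0r addr0.
    by rewrite eqxx.
  apply: eq_bigr => a _.
  under eq_bigr => i _ do rewrite VE /val pickleK_inv -/(L c s (nth f0 (YL t a) i)).
  rewrite sum_nth_pow; last by rewrite /YL; case: choice.pickle_inv.
  rewrite /YL; case: choice.pickle_inv => [y|]; last by rewrite big_nil.
  exact: Ylist_ok.
have VZ : \sum_(a <- D | isZ a) linmap phi w a ^+ 3 = \sum_(y <- s) Stage s y.
  rewrite big_mkcond /= (sum_reindex (s2 := Zcoords A) (undup_uniq _) (uniq_Zcoords A)); last first.
    move=> a; case: ifP => [Za|_]; last by rewrite eqxx.
    move=> nz.
    have nz' : linmap phi w a != 0 by apply: contraNneq nz => ->; rewrite expr0n.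
    have [j js nzj] := Vnz _ nz'.
    move: Za; case: a {nz nz'} nzj => [[t'|[t' n]]|n] nzj //= _.
    rewrite mem_undup (val_supp (hA j js) nzj).
    by apply/esym; exact: valZ_supp (hA j js) nzj.
  rewrite big_seq (eq_bigr (fun a => linmap phi w a ^+ 3)); last first.
    by move=> a /mapP [ai _ ->].
  rewrite -big_seq /Zcoords big_map /pairsZ big_allpairs_dep.
  rewrite -(@stage_sum s _ A us); first last.
  - exact: hA.
  - by move=> y nz; apply: contraR nz => ys; rewrite Stage0.
  apply: eq_bigr => a _.
  under eq_bigr => i _ do rewrite VE /val pickleK_inv -/(L c s (nth f0 (ZL a) i)).
  rewrite sum_nth_pow //.
  rewrite /ZL; case: choice.pickle_inv => [y|]; last by rewrite big_nil.
  exact: Zlist_ok.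
rewrite VZ.
rewrite (eq_bigr (fun t => L c s (Cf t) * Ev c 2 (Q t) s)); last first.
  move=> t _; rewrite VX VY; field; exact: h3.
rewrite -main_id //.
rewrite /Ev FSs /feval; apply: eq_bigr => m _; congr (_ * _).
by rewrite /mprod; apply: eq_bigr => i _; rewrite Hc.
Qed.

End Main.


Lemma data_ex (k : fieldType) (J : choiceType) (r : nat) (g : fseries k J)
  (Q : 'I_r -> fseries k J) (x : J) (cx : 'I_r -> k) :
  finite_strength 2 (fun m => fderiv g x m - \sum_(t < r) cx t * Q t m) ->
  exists (n : nat) (a b : nat -> fseries k J),
    (forall i, homog 1 (a i)) /\ (forall i, homog 1 (b i)) /\
    forall m, fderiv g x m - \sum_(t < r) cx t * Q t m = \sum_(i < n) fmul (a i) (b i) m.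
Proof.
case=> n [a [b [da [db [hyp E]]]]].
pose z : fseries k J := fun _ => 0.
exists n, (fun i => if insub i is Some t then a t else z),
          (fun i => if insub i is Some t then b t else z).
have hz : homog 1 z by [].
split; [|split].
- move=> i; case: insubP => [t _ _|_] //.
  have [/andP[h1 h2] _ _ ha _] := hyp t; move: h1 h2 ha; case: (da t) => [|[|]] //.
- move=> i; case: insubP => [t _ _|_] //.
  have [_ /andP[h1 h2] _ _ hb] := hyp t; move: h1 h2 hb; case: (db t) => [|[|]] //.
move=> m; have := congr1 (fun f => f m) E => /= ->.
by apply: eq_bigr => i _; rewrite valK.
Qed.

Lemma nat_neq0 (k : fieldType) : ~~ (2%N \in [pchar k]) -> ~~ (3%N \in [pchar k]) ->
  [/\ (3%:R : k) != 0, (4%:R : k) != 0 & (24%:R : k) != 0].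
Proof.
rewrite !inE /= => h2 h3.
have e4 : (4%:R : k) = 2%:R * 2%:R by rewrite -natrM.
have e24 : (24%:R : k) = 2%:R * 2%:R * (2%:R * 3%:R) by rewrite -!natrM.
by split => //; rewrite ?e4 ?e24 !mulf_neq0.
Qed.

Unset Implicit Arguments.

Theorem lemma5p3 (k : closedFieldType)
    (hchar2 : ~~ (2%N \in [pchar k])) (hchar3 : ~~ (3%N \in [pchar k]))
    (r : nat) (J : countType) (g : fseries k J)
    (hg : homog 3 g) (hrrk : rrk_le g r) :
  cubic_embeds g (f_V k r).
Proof.
have [h3 h4 h24] := nat_neq0 hchar2 hchar3.
case: hrrk => Q [hQ H].
pose Cc x := proj1_sig (constructive_indefinite_description _ (H x)).
have HC x := proj2_sig (constructive_indefinite_description _ (H x)).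
have D1 x := data_ex (HC x).
pose sN x := proj1_sig (constructive_indefinite_description _ (D1 x)).
have D2 x := proj2_sig (constructive_indefinite_description _ (D1 x)).
pose al x := proj1_sig (constructive_indefinite_description _ (D2 x)).
have D3 x := proj2_sig (constructive_indefinite_description _ (D2 x)).
pose be x := proj1_sig (constructive_indefinite_description _ (D3 x)).
have D4 x := proj2_sig (constructive_indefinite_description _ (D3 x)).
have Hal : forall x i, homog 1 (al x i) by move=> x i; case: (D4 x) => h _; exact: h.
have Hbe : forall x i, homog 1 (be x i) by move=> x i; case: (D4 x) => _ [h _]; exact: h.
have Hd : forall x m, fderiv g x m - \sum_(t < r) Cc x t * Q t m =
    \sum_(i < sN x) fmul (al x i) (be x i) m.
  by move=> x m; case: (D4 x) => _ [_ h]; exact: h.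
exists (phi g Q Cc sN al be) => w.
exact: (@embed_eq k J (fun j => w j) r g Q Cc sN al be Hd Hal Hbe w (fun j => erefl) h24 h4 h3).
Qed.
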